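(* Let $H$ carry a pre-Hopf-Frobenius algebra structure in a strict symmetric monoidal category $\mathcal{C}$, with green monoid $(\mu_g,\eta_g)$, green comonoid $(\delta_g,\varepsilon_g)$, red monoid $(\mu_r,\eta_r)$, red comonoid $(\delta_r,\varepsilon_r)$ and antipode $s$. Then $(H,\eta_r,\varepsilon_g)$ is an integral Hopf algebra (for the Hopf algebra $(H,\mu_g,\eta_g,\delta_r,\varepsilon_r,s)$) if and only if $$s=\big(\mathrm{id}_H\otimes(\varepsilon_r\circ\mu_r)\big)\circ\big((\delta_g\circ\eta_g)\otimes\mathrm{id}_H\big).$$
   Context: $\mathcal{C}$ is a strict symmetric monoidal category with unit object $I$ and symmetry $\sigma$. A Hopf algebra $(H,\mu,\eta,\Delta,\varepsilon,s)$: an object $H$ with an associative unital monoid $(\mu,\eta)$ and coassociative counital comonoid $(\Delta,\varepsilon)$ satisfying $\Delta\circ\mu=(\mu\otimes\mu)\circ(\mathrm{id}\otimes\sigma_{H,H}\otimes\mathrm{id})\circ(\Delta\otimes\Delta)$, $\Delta\circ\eta=\eta\otimes\eta$, $\varepsilon\circ\mu=\varepsilon\otimes\varepsilon$, $\varepsilon\circ\eta=\mathrm{id}_I$, and $s\colon H\to H$ with $\mu\circ(s\otimes\mathrm{id})\circ\Delta=\eta\circ\varepsilon=\mu\circ(\mathrm{id}\otimes s)\circ\Delta$. For such a Hopf algebra, a left cointegral is a point $\Lambda\colon I\to H$ with $\mu\circ(\Lambda\otimes\mathrm{id}_H)=\Lambda\circ\varepsilon$; a right integral is a copoint $\lambda\colon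 H\to I$ with $(\mathrm{id}_H\otimes\lambda)\circ\Delta=\eta\circ\lambda$; $(H,\Lambda,\lambda)$ is an integral Hopf algebra if $\Lambda$ is a left cointegral, $\lambda$ a right integral and $\lambda\circ\Lambda=\mathrm{id}_I$. A Frobenius algebra is a monoid $(m,u)$ and comonoid $(d,c)$ on the same object with $(\mathrm{id}\otimes m)\circ(d\otimes\mathrm{id})=d\circ m=(m\otimes\mathrm{id})\circ(\mathrm{id}\otimes d)$. A pre-Hopf-Frobenius algebra consists of an object $H$ with a green monoid $(\mu_g,\eta_g)$, green comonoid $(\delta_g,\varepsilon_g)$, red monoid $(\mu_r,\eta_r)$, red comonoid $(\delta_r,\varepsilon_r)$ and an endomorphism $s$ such that $(\mu_g,\eta_g,\delta_g,\varepsilon_g)$ and $(\mu_r,\eta_r,\delta_r,\varepsilon_r)$ are Frobenius algebras and $(\mu_g,\eta_g,\delta_r,\varepsilon_r,s)$ is a Hopf algebra. *)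

(* Defs.v *)
(* no category-theory library is installed, so we define
   strict symmetric monoidal categories ourselves, in the one-sorted
   (arrows-only style) presentation: a type of objects, a type of morphisms
   with domain/codomain maps, and total composition/tensor operations whose
   laws are required whenever the arguments are composable.  This avoids
   dependent-type transports when expressing strictness
   ((a ⊗ b) ⊗ c = a ⊗ (b ⊗ c), I ⊗ a = a = a ⊗ I). *)

Record SSMC : Type := {
  Ob : Type;
  Mor : Type;
  dom : Mor -> Ob;
  cod : Mor -> Ob;
  idm : Ob -> Mor;
  comp : Mor -> Mor -> Mor;
  tens0 : Ob -> Ob -> Ob;
  tens1 : Mor -> Mor -> Mor;
  unitOb : Ob;
  sym : Ob -> Ob -> Mor;
  dom_idm : forall a, dom (idm a) = a;
  cod_idm : forall a, cod (idm a) = a;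
  dom_comp : forall g f, cod f = dom g -> dom (comp g f) = dom f;
  cod_comp : forall g f, cod f = dom g -> cod (comp g f) = cod g;
  comp_idl : forall f, comp (idm (cod f)) f = f;
  comp_idr : forall f, comp f (idm (dom f)) = f;
  comp_assoc : forall h g f, cod f = dom g -> cod g = dom h ->
      comp h (comp g f) = comp (comp h g) f;
  dom_tens : forall f g, dom (tens1 f g) = tens0 (dom f) (dom g);
  cod_tens : forall f g, cod (tens1 f g) = tens0 (cod f) (cod g);
  tens_idm : forall a b, tens1 (idm a) (idm b) = idm (tens0 a b);
  tens_comp : forall g f g' f', cod f = dom g -> cod f' = dom g' ->
      tens1 (comp g f) (comp g' f') = comp (tens1 g g') (tens1 f f');
  tens0_assoc : forall a b c, tens0 (tens0 a b) c = tens0 a (tens0 b c);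
  tens0_unitl : forall a, tens0 unitOb a = a;
  tens0_unitr : forall a, tens0 a unitOb = a;
  tens1_assoc : forall f g h, tens1 (tens1 f g) h = tens1 f (tens1 g h);
  tens1_unitl : forall f, tens1 (idm unitOb) f = f;
  tens1_unitr : forall f, tens1 f (idm unitOb) = f;
  dom_sym : forall a b, dom (sym a b) = tens0 a b;
  cod_sym : forall a b, cod (sym a b) = tens0 b a;
  sym_nat : forall f g,
      comp (sym (cod f) (cod g)) (tens1 f g) = comp (tens1 g f) (sym (dom f) (dom g));
  sym_invol : forall a b, comp (sym b a) (sym a b) = idm (tens0 a b);
  sym_hexagon : forall a b c,
      sym a (tens0 b c) = comp (tens1 (idm b) (sym a c)) (tens1 (sym a b) (idm c));
  sym_unit : forall a, sym a unitOb = idm a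
}.

Arguments dom {s} _. Arguments cod {s} _. Arguments idm {s} _.
Arguments comp {s} _ _. Arguments tens0 {s} _ _. Arguments tens1 {s} _ _.
Arguments unitOb {s}. Arguments sym {s} _ _.

Declare Scope ssmc_scope.
Open Scope ssmc_scope.
Notation "g ∘ f" := (comp g f) (at level 40, left associativity) : ssmc_scope.
Notation "f ⊗ g" := (tens1 f g) (at level 35, right associativity) : ssmc_scope.
Notation "a ⊗o b" := (tens0 a b) (at level 35, right associativity) : ssmc_scope.

Section Algebra.
Variable C : SSMC.
Variable H : Ob C.

Definition hom (f : Mor C) (a b : Ob C) : Prop := dom f = a /\ cod f = b.

Definition id_H : Mor C := idm H.

Definition is_monoid (m u : Mor C) : Prop :=
  hom m (H ⊗o H) H /\ hom u unitOb H /\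
  m ∘ (m ⊗ id_H) = m ∘ (id_H ⊗ m) /\
  m ∘ (u ⊗ id_H) = id_H /\ m ∘ (id_H ⊗ u) = id_H.

Definition is_comonoid (d c : Mor C) : Prop :=
  hom d H (H ⊗o H) /\ hom c H unitOb /\
  (d ⊗ id_H) ∘ d = (id_H ⊗ d) ∘ d /\
  (c ⊗ id_H) ∘ d = id_H /\ (id_H ⊗ c) ∘ d = id_H.

Definition is_frobenius (m u d c : Mor C) : Prop :=
  is_monoid m u /\ is_comonoid d c /\
  (id_H ⊗ m) ∘ (d ⊗ id_H) = d ∘ m /\
  d ∘ m = (m ⊗ id_H) ∘ (id_H ⊗ d).

Definition is_hopf (mu eta Delta eps s : Mor C) : Prop :=
  is_monoid mu eta /\ is_comonoid Delta eps /\ hom s H H /\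
  Delta ∘ mu = (mu ⊗ mu) ∘ (id_H ⊗ sym H H ⊗ id_H) ∘ (Delta ⊗ Delta) /\
  Delta ∘ eta = eta ⊗ eta /\
  eps ∘ mu = eps ⊗ eps /\
  eps ∘ eta = idm unitOb /\
  mu ∘ (s ⊗ id_H) ∘ Delta = eta ∘ eps /\
  eta ∘ eps = mu ∘ (id_H ⊗ s) ∘ Delta.

Definition is_left_cointegral (mu eps Lambda : Mor C) : Prop :=
  hom Lambda unitOb H /\ mu ∘ (Lambda ⊗ id_H) = Lambda ∘ eps.

Definition is_right_integral (eta Delta lambda : Mor C) : Prop :=
  hom lambda H unitOb /\ (id_H ⊗ lambda) ∘ Delta = eta ∘ lambda.

Definition is_integral_hopf (mu eta Delta eps s Lambda lambda : Mor C) : Prop :=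
  is_hopf mu eta Delta eps s /\
  is_left_cointegral mu eps Lambda /\
  is_right_integral eta Delta lambda /\
  lambda ∘ Lambda = idm unitOb.

Definition is_pre_hopf_frobenius
    (mug etag deltag epsg mur etar deltar epsr s : Mor C) : Prop :=
  is_frobenius mug etag deltag epsg /\
  is_frobenius mur etar deltar epsr /\
  is_hopf mug etag deltar epsr s.

End Algebra.

(* Main.v *)
Require Import Defs.
From Stdlib Require Import Setoid.

Section S.
Variable C : SSMC.
Variable H : Ob C.
Implicit Types (f g h X : Mor C) (A : Ob C).

Fixpoint Hn (n : nat) : Ob C :=
  match n with 0 => unitOb | S k => match k with 0 => H | _ => H ⊗o Hn k end end.

Lemma Hn_add a b : Hn (a + b) = Hn a ⊗o Hn b.
Proof.
  induction a as [|a IH].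
  - simpl. now rewrite tens0_unitl.
  - destruct a as [|a].
    + destruct b; simpl; [now rewrite tens0_unitr | reflexivity].
    + change (Hn (S (S a) + b)) with (H ⊗o Hn (S a + b)).
      rewrite IH. change (Hn (S (S a))) with (H ⊗o Hn (S a)).
      now rewrite tens0_assoc.
Qed.

Definition T (f : Mor C) a b := dom f = Hn a /\ cod f = Hn b.

Lemma T_comp f g a b b' c : T f a b -> T g b' c -> b = b' -> T (g ∘ f) a c.
Proof.
  intros [h1 h2] [h3 h4] e; subst. split.
  - rewrite dom_comp; auto; congruence.
  - rewrite cod_comp; auto; congruence.
Qed.

Lemma T_tens f g a b c d n m : T f a b -> T g c d -> n = a + c -> m = b + d -> T (f ⊗ g) n m.
Proof.
  intros [h1 h2] [h3 h4] e1 e2; subst. split.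
  - rewrite dom_tens, Hn_add; congruence.
  - rewrite cod_tens, Hn_add; congruence.
Qed.

Lemma T_idn n : T (idm (Hn n)) n n.
Proof. split; [apply dom_idm | apply cod_idm]. Qed.
Lemma T_idH : T (idm H) 1 1.
Proof. exact (T_idn 1). Qed.
Lemma T_idI : T (idm unitOb) 0 0.
Proof. exact (T_idn 0). Qed.
Lemma T_idHH : T (idm (H ⊗o H)) 2 2.
Proof. exact (T_idn 2). Qed.
Lemma T_idHHH : T (idm (H ⊗o H ⊗o H)) 3 3.
Proof. exact (T_idn 3). Qed.
Lemma T_sym : T (sym H H) 2 2.
Proof. split; [apply dom_sym | apply cod_sym]. Qed.

Lemma cd_lem f g a b b' c : T f a b -> T g b' c -> b = b' -> cod f = dom g.
Proof. intros [_ h] [h' _] e; subst; congruence. Qed.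

Lemma dom_T f a b : T f a b -> dom f = Hn a. Proof. now intros []. Qed.
Lemma cod_T f a b : T f a b -> cod f = Hn b. Proof. now intros []. Qed.

Ltac ty := match goal with
 | |- T (?g ∘ ?f) _ _ => eapply T_comp; [ty | ty | reflexivity]
 | |- T (?f ⊗ ?g) _ _ => eapply T_tens; [ty | ty | reflexivity | reflexivity]
 | |- T (idm H) _ _ => apply T_idH
 | |- T (idm unitOb) _ _ => apply T_idI
 | |- T (idm (H ⊗o H)) _ _ => apply T_idHH
 | |- T (idm (H ⊗o H ⊗o H)) _ _ => apply T_idHHH
 | |- T (sym H H) _ _ => apply T_sym
 | |- T ?f _ _ => eassumption
end.

Ltac objeq := cbn [Hn Nat.add]; repeat rewrite ?tens0_unitl, ?tens0_unitr, ?tens0_assoc; reflexivity.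

Ltac tyeq := match goal with
 | |- cod ?f = dom ?g => eapply cd_lem; [ty|ty|reflexivity]
 | |- dom ?g = cod ?f => symmetry; eapply cd_lem; [ty|ty|reflexivity]
 | |- cod ?f = ?Y => let h := fresh in eassert (h : T f _ _) by ty; rewrite (cod_T _ _ _ h); clear h; objeq
 | |- dom ?f = ?Y => let h := fresh in eassert (h : T f _ _) by ty; rewrite (dom_T _ _ _ h); clear h; objeq
end.

Lemma assoc h g f : cod f = dom g -> cod g = dom h -> h ∘ (g ∘ f) = (h ∘ g) ∘ f.
Proof. intros; now apply comp_assoc. Qed.
Lemma idl f A : cod f = A -> idm A ∘ f = f.
Proof. intros <-; apply comp_idl. Qed.
Lemma idr f A : dom f = A -> f ∘ idm A = f.
Proof. intros <-; apply comp_idr. Qed.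
Lemma tc g f (g' f' : Mor C) : cod f = dom g -> cod f' = dom g' -> (g ∘ f) ⊗ (g' ∘ f') = (g ⊗ g') ∘ (f ⊗ f').
Proof. apply tens_comp. Qed.
Lemma tcl g f A : cod f = dom g -> (g ∘ f) ⊗ idm A = (g ⊗ idm A) ∘ (f ⊗ idm A).
Proof. intros e. rewrite <- tens_comp; auto. 2: now rewrite cod_idm, dom_idm.
  f_equal. rewrite <- (comp_idl _ (idm A)) at 1. now rewrite cod_idm. Qed.
Lemma tcr g f A : cod f = dom g -> idm A ⊗ (g ∘ f) = (idm A ⊗ g) ∘ (idm A ⊗ f).
Proof. intros e. rewrite <- tens_comp; auto. 2: now rewrite cod_idm, dom_idm.
  f_equal. rewrite <- (comp_idl _ (idm A)) at 1. now rewrite cod_idm. Qed.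
Lemma xl f g : f ⊗ g = (f ⊗ idm (cod g)) ∘ (idm (dom f) ⊗ g).
Proof. rewrite <- tens_comp. 2,3: now rewrite ?cod_idm, ?dom_idm. now rewrite comp_idr, comp_idl. Qed.
Lemma xr f g : f ⊗ g = (idm (cod f) ⊗ g) ∘ (f ⊗ idm (dom g)).
Proof. rewrite <- tens_comp. 2,3: now rewrite ?cod_idm, ?dom_idm. now rewrite comp_idr, comp_idl. Qed.

Lemma tcL g f g' : cod f = dom g -> (g ∘ f) ⊗ g' = (g ⊗ g') ∘ (f ⊗ idm (dom g')).
Proof. intros. rewrite <- tc. now rewrite comp_idr. auto. now rewrite cod_idm. Qed.
Lemma tcR g g' f' : cod f' = dom g' -> g ⊗ (g' ∘ f') = (g ⊗ g') ∘ (idm (dom g) ⊗ f').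
Proof. intros. rewrite <- tc. now rewrite comp_idr. now rewrite cod_idm. auto. Qed.
Lemma tcL2 g f g' : cod f = dom g -> (g ∘ f) ⊗ g' = (g ⊗ idm (cod g')) ∘ (f ⊗ g').
Proof. intros. rewrite <- tc. now rewrite comp_idl. auto. now rewrite dom_idm. Qed.
Lemma tcR2 g g' f' : cod f' = dom g' -> g ⊗ (g' ∘ f') = (idm (cod g) ⊗ g') ∘ (g ⊗ f').
Proof. intros. rewrite <- tc. now rewrite comp_idl. now rewrite dom_idm. auto. Qed.
Lemma merge g g' f f' X : cod f = dom g -> cod f' = dom g' -> cod X = dom (f ⊗ f') ->
  (g ⊗ g') ∘ ((f ⊗ f') ∘ X) = ((g ∘ f) ⊗ (g' ∘ f')) ∘ X.
Proof. intros. rewrite tc by auto. rewrite assoc; auto. rewrite !dom_tens, !cod_tens. congruence. Qed.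
Lemma merge0 g g' f f' : cod f = dom g -> cod f' = dom g' ->
  (g ⊗ g') ∘ (f ⊗ f') = ((g ∘ f) ⊗ (g' ∘ f')).
Proof. intros. now rewrite tc by auto. Qed.

Lemma lift2 g f h X : g ∘ f = h -> cod X = dom f -> cod f = dom g -> g ∘ (f ∘ X) = h ∘ X.
Proof. intros <- e1 e2. now rewrite assoc. Qed.

Lemma lift3 h g f R X : h ∘ (g ∘ f) = R -> cod X = dom f -> cod f = dom g -> cod g = dom h ->
  h ∘ (g ∘ (f ∘ X)) = R ∘ X.
Proof. intros <- e1 e2 e3. rewrite (assoc g f X) by auto.
  rewrite (assoc h (g ∘ f) X); [reflexivity| rewrite dom_comp; auto | rewrite cod_comp; auto]. Qed.
Ltac ra := repeat (rewrite <- assoc by tyeq).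
Ltac rw3 E := first [rewrite (lift3 _ _ _ _ _ E) by tyeq | rewrite E]; ra.
Ltac rw E := first [rewrite (lift2 _ _ _ _ E) by tyeq | rewrite E]; ra.
Ltac rwl E := first [rewrite <- (lift2 _ _ _ _ (eq_sym E)) by tyeq | rewrite <- E].
Ltac mg := first [rewrite merge by tyeq | rewrite merge0 by tyeq].
Ltac ids := repeat (first [rewrite tens_idm | rewrite idl by tyeq | rewrite idr by tyeq]);
  repeat rewrite <- tens_idm; repeat rewrite ?tens1_unitl, ?tens1_unitr.

Section Frob.
Variables m u d c : Mor C.
Hypotheses (Tm : T m 2 1) (Tu : T u 0 1) (Td : T d 1 2) (Tc : T c 1 0).
Hypothesis F : is_frobenius C H m u d c.

Lemma snake1 : (idm H ⊗ (c ∘ m)) ∘ ((d ∘ u) ⊗ idm H) = idm H.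
Proof.
  destruct F as [[_ [_ [ma [mu1 mu2]]]] [[_ [_ [ca [cu1 cu2]]]] [f1 f2]]].
  unfold id_H in *. rewrite tcr, tcl by tyeq. ra. rw f1. ra. rw mu1. ids. exact cu2.
Qed.
Lemma snake2 : ((c ∘ m) ⊗ idm H) ∘ (idm H ⊗ (d ∘ u)) = idm H.
Proof.
  destruct F as [[_ [_ [ma [mu1 mu2]]]] [[_ [_ [ca [cu1 cu2]]]] [f1 f2]]].
  unfold id_H in *. rewrite tcr, tcl by tyeq. ra. rw (eq_sym f2). ra. rw mu2. ids. exact cu1.
Qed.
End Frob.

Ltac fixdc := repeat match goal with
 | |- context [dom ?X] => let h := fresh in eassert (h : T X _ _) by ty; rewrite (dom_T _ _ _ h); clear h
 | |- context [cod ?X] => let h := fresh in eassert (h : T X _ _) by ty; rewrite (cod_T _ _ _ h); clear h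
 end; cbn [Hn Nat.add]; repeat rewrite <- tens_idm; repeat rewrite ?tens1_unitl, ?tens1_unitr.

Section Main.
Variables m u d c M U D e s : Mor C.
Hypotheses (Tm : T m 2 1) (Tu : T u 0 1) (Td : T d 1 2) (Tc : T c 1 0)
  (TM : T M 2 1) (TU : T U 0 1) (TD : T D 1 2) (Te : T e 1 0) (Ts : T s 1 1).
Hypothesis P : is_pre_hopf_frobenius C H m u d c M U D e s.

Let G := proj1 P.
Let R := proj1 (proj2 P).
Let Hopf := proj2 (proj2 P).

Lemma gs1 : (idm H ⊗ (c ∘ m)) ∘ ((d ∘ u) ⊗ idm H) = idm H.
Proof. now apply snake1. Qed.
Lemma gs2 : ((c ∘ m) ⊗ idm H) ∘ (idm H ⊗ (d ∘ u)) = idm H.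
Proof. now apply snake2. Qed.
Lemma rs1 : (idm H ⊗ (e ∘ M)) ∘ ((D ∘ U) ⊗ idm H) = idm H.
Proof. now apply snake1. Qed.
Lemma rs2 : ((e ∘ M) ⊗ idm H) ∘ (idm H ⊗ (D ∘ U)) = idm H.
Proof. now apply snake2. Qed.

Ltac unpack :=
  pose proof G as [[_ [_ [gm [gu1 gu2]]]] [[_ [_ [gca [gcu1 gcu2]]]] [gf1 gf2]]];
  pose proof R as [[_ [_ [rm [ru1 ru2]]]] [[_ [_ [rca [rcu1 rcu2]]]] [rf1 rf2]]];
  pose proof Hopf as [_ [_ [_ [bi [Du [em [eu [as1 as2]]]]]]]];
  unfold id_H in *.

Ltac raH h := repeat (rewrite <- assoc in h by tyeq).

Lemma es : e ∘ s = e.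
Proof.
  unpack; raH bi; raH as1; raH as2.
  transitivity (((e ∘ s) ⊗ e) ∘ D).
  - rewrite xl. fixdc. ra. rw rcu2. ids. reflexivity.
  - rewrite tcL by tyeq. fixdc. rewrite <- em. ra. rw as1. rw eu. ids. reflexivity.
Qed.

Lemma su : s ∘ u = u.
Proof.
  unpack; raH bi; raH as1; raH as2.
  transitivity (m ∘ ((idm H ⊗ u) ∘ (s ∘ u))).
  - rw gu2. ids. reflexivity.
  - transitivity (m ∘ ((s ⊗ idm H) ∘ (D ∘ u))).
    + f_equal. rewrite Du. rewrite merge0 by tyeq. ids. rewrite (xr (s ∘ u) u). fixdc. reflexivity.
    + rw3 as1. rw eu. ids. reflexivity.
Qed.

Notation "'ι'" := (idm H).

Ltac ptswap x y := transitivity (x ⊗ y);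
  [ rewrite (xl x y); fixdc; reflexivity | rewrite (xr x y); fixdc; reflexivity ].

Ltac xlr f g := transitivity (f ⊗ g);
  [ rewrite (xr f g); fixdc; reflexivity | rewrite (xl f g); fixdc; reflexivity ].
Section Back.
Hypothesis hs : s = (idm H ⊗ (e ∘ M)) ∘ ((d ∘ u) ⊗ idm H).

Lemma stepA : (s ⊗ ι) ∘ (D ∘ U) = d ∘ u.
Proof.
  pose proof rs2 as r2.
  rewrite hs. rewrite tcl by tyeq. rewrite !tens1_assoc. ra.
  assert (E : ((d ∘ u) ⊗ (ι ⊗ ι)) ∘ (D ∘ U) = ((ι ⊗ ι) ⊗ (D ∘ U)) ∘ (d ∘ u)) by ptswap (d ∘ u) (D ∘ U).
  rewrite E. ra. rewrite tens1_assoc. rewrite merge by tyeq. rewrite r2. ids. reflexivity.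
Qed.

Lemma stepB : (e ⊗ ι) ∘ (d ∘ u) = U.
Proof.
  pose proof R as [[_ [_ [rm [ru1 ru2]]]] [[_ [_ [rca [rcu1 rcu2]]]] [rf1 rf2]]].
  unfold id_H in *. rewrite <- stepA. rewrite merge by tyeq. rewrite es. ids. rw rcu1. ids. reflexivity.
Qed.

Lemma stepC : c ∘ (m ∘ (U ⊗ ι)) = e.
Proof.
  pose proof gs1 as g1.
  transitivity (e ∘ ((ι ⊗ (c ∘ m)) ∘ ((d ∘ u) ⊗ ι))).
  2: { rewrite g1. ids. reflexivity. }
  assert (Q : e ∘ (ι ⊗ (c ∘ m)) = (c ∘ m) ∘ ((e ⊗ ι) ⊗ ι)).
  { transitivity (e ⊗ (c ∘ m)).
    - rewrite (xl e (c ∘ m)). fixdc. reflexivity.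
    - rewrite (xr e (c ∘ m)). fixdc. rewrite tens1_assoc. reflexivity. }
  rw Q. mg. rewrite stepB. ids. reflexivity.
Qed.

Lemma stepD : c ∘ U = idm unitOb.
Proof.
  unpack.
  transitivity (c ∘ (m ∘ ((ι ⊗ u) ∘ U))).
  { rw gu2. ids. reflexivity. }
  assert (E : (ι ⊗ u) ∘ U = (U ⊗ ι) ∘ u) by (symmetry; ptswap U u).
  rewrite E. rw3 stepC. exact eu.
Qed.

Lemma stepE : m ∘ (U ⊗ ι) = U ∘ e.
Proof.
  unpack. pose proof gs2 as g2.
  transitivity (((c ∘ m) ⊗ ι) ∘ ((ι ⊗ (d ∘ u)) ∘ (m ∘ (U ⊗ ι)))).
  { rw g2. ids. reflexivity. }
  assert (E1 : (ι ⊗ (d ∘ u)) ∘ m = (m ⊗ (ι ⊗ ι)) ∘ ((ι ⊗ ι) ⊗ (d ∘ u))) by xlr m (d ∘ u).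
  rw E1. rewrite <- (tens1_assoc _ m ι ι). mg. ra. rw gm. ids.
  rewrite (assoc c m (ι ⊗ m)) by tyeq. rewrite (tcl (c ∘ m) (ι ⊗ m)) by tyeq.
  rewrite (tens1_assoc _ ι ι (d ∘ u)). ra.
  assert (E2 : (ι ⊗ (ι ⊗ (d ∘ u))) ∘ (U ⊗ ι) = (U ⊗ (ι ⊗ (ι ⊗ ι))) ∘ (ι ⊗ (d ∘ u))).
  { rewrite merge0 by tyeq. ids. rewrite (xl U (ι ⊗ (d ∘ u))). fixdc. reflexivity. }
  rewrite E2.
  assert (E3 : ((ι ⊗ m) ⊗ ι) ∘ (U ⊗ (ι ⊗ (ι ⊗ ι))) = (U ⊗ (ι ⊗ ι)) ∘ (m ⊗ ι)).
  { rewrite (tens1_assoc _ ι m ι). rewrite merge0 by tyeq. ids. rewrite (xl U (m ⊗ ι)). fixdc. reflexivity. }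
  rw E3.
  assert (E4 : ((c ∘ m) ⊗ ι) ∘ (U ⊗ (ι ⊗ ι)) = e ⊗ ι).
  { rewrite <- (tens1_assoc _ U ι ι). rewrite merge0 by tyeq. ra. rewrite stepC. ids. reflexivity. }
  rw E4. mg. rewrite em. ids. rewrite (tens1_assoc _ e e ι). mg. ids. rewrite stepB.
  rewrite (xr e U). fixdc. reflexivity.
Qed.

Lemma stepF : c ∘ (m ∘ (ι ⊗ s)) = e ∘ M.
Proof.
  pose proof gs2 as g2.
  rewrite hs. rewrite tcr by tyeq.
  assert (Q : c ∘ (m ∘ (ι ⊗ (ι ⊗ (e ∘ M)))) = (e ∘ M) ∘ ((c ∘ m) ⊗ (ι ⊗ ι))).
  { transitivity ((c ∘ m) ⊗ (e ∘ M)).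
    - rewrite (xl (c ∘ m) (e ∘ M)). fixdc. rewrite tens1_assoc. ra. reflexivity.
    - rewrite (xr (c ∘ m) (e ∘ M)). fixdc. reflexivity. }
  rw3 Q.
  rewrite <- (tens1_assoc _ (c ∘ m) ι ι), <- (tens1_assoc _ ι (d ∘ u) ι).
  mg. rewrite g2. ids. reflexivity.
Qed.

Lemma stepG : c = e ∘ (M ∘ (ι ⊗ u)).
Proof.
  unpack.
  transitivity (c ∘ (m ∘ (ι ⊗ u))). { rw gu2. ids. reflexivity. }
  rewrite <- su at 1. rewrite tcr by tyeq. rw3 stepF. reflexivity.
Qed.

Lemma right_int : (ι ⊗ c) ∘ D = u ∘ c.
Proof.
  unpack.
  transitivity (M ∘ (ι ⊗ u)).
  - rewrite stepG at 1. rewrite !tcr by tyeq. ra.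
    assert (Q : (ι ⊗ (ι ⊗ u)) ∘ D = (D ⊗ ι) ∘ (ι ⊗ u)).
    { transitivity (D ⊗ u).
      - rewrite (xr D u). fixdc. rewrite tens1_assoc. reflexivity.
      - rewrite (xl D u). fixdc. reflexivity. }
    rewrite Q. rw rf1. rw rcu2. ids. reflexivity.
  - transitivity ((e ⊗ ι) ∘ (D ∘ (M ∘ (ι ⊗ u)))). { rw rcu1. ids. reflexivity. }
    rw rf2. mg. rewrite (merge0 ι D ι u) by tyeq. rewrite Du. ids. rewrite <- (tens1_assoc _ ι u u). mg. ra.
    rewrite <- stepG. ids. rewrite (xr c u). fixdc. reflexivity.
Qed.
End Back.

Lemma symI A : sym unitOb A = idm A.
Proof.
  pose proof (sym_invol C A unitOb) as h. rewrite sym_unit in h.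
  rewrite tens0_unitr in h. rewrite <- h. symmetry. apply idr. rewrite dom_sym, tens0_unitl. reflexivity.
Qed.

Lemma symU : sym H H ∘ (U ⊗ ι) = ι ⊗ U.
Proof.
  pose proof (sym_nat C U ι) as h. rewrite (cod_T _ _ _ TU), (dom_T _ _ _ TU) in h.
  rewrite cod_idm, dom_idm in h. simpl in h. rewrite h, symI. apply idr. tyeq.
Qed.

Section Fwd.
Hypotheses (li : m ∘ (U ⊗ ι) = U ∘ e) (ri : (ι ⊗ c) ∘ D = u ∘ c) (cU : c ∘ U = idm unitOb).

Lemma Q4 : m ∘ (ι ⊗ (m ⊗ (c ∘ m))) = m ∘ (m ⊗ (ι ⊗ (c ∘ m))).
Proof.
  unpack.
  rewrite (xl m (c ∘ m)). fixdc. rewrite tcr by tyeq. rw (eq_sym gm).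
  rewrite (tens1_assoc _ ι ι (c ∘ m)). rewrite <- (tens1_assoc _ ι ι (ι ⊗ (c ∘ m))).
  mg. ids. reflexivity.
Qed.

Lemma Q5 : (ι ⊗ (D ⊗ D)) ∘ (((s ⊗ ι) ∘ (D ∘ U)) ⊗ ι)
  = (s ⊗ (ι ⊗ (ι ⊗ (ι ⊗ ι)))) ∘ (((D ⊗ ι) ∘ (D ∘ U)) ⊗ D).
Proof.
  unpack.
  rewrite tcl by tyeq. rewrite (tens1_assoc _ s ι ι). mg. ids.
  rewrite (xl s (D ⊗ D)). fixdc. ra. f_equal.
  rewrite tcl by tyeq. rewrite <- (tens1_assoc _ ι D D). mg. rewrite <- rca. ids.
  mg. ids. ra. reflexivity.
Qed.

Lemma Q6 : (m ⊗ (ι ⊗ (c ∘ m))) ∘ ((ι ⊗ (ι ⊗ (sym H H ⊗ ι))) ∘ (s ⊗ (ι ⊗ (ι ⊗ (ι ⊗ ι)))))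
  = (m ∘ (s ⊗ ι)) ⊗ ((ι ⊗ (c ∘ m)) ∘ (sym H H ⊗ ι)).
Proof.
  rewrite <- (tens1_assoc _ ι ι (sym H H ⊗ ι)). mg. ids.
  rewrite <- (tens1_assoc _ s ι (ι ⊗ (ι ⊗ ι))). mg. ids. reflexivity.
Qed.

Lemma stepE' : (ι ⊗ (c ∘ m)) ∘ (((s ⊗ ι) ∘ (D ∘ U)) ⊗ ι) = ι.
Proof.
  unpack; raH bi; raH as1; raH as2.
  transitivity (m ∘ ((ι ⊗ u) ∘ ((ι ⊗ (c ∘ m)) ∘ (((s ⊗ ι) ∘ (D ∘ U)) ⊗ ι)))).
  { rw gu2. ids. reflexivity. }
  mg. ids. rw (eq_sym ri). rw bi. mg. ids. rewrite !tcr by tyeq. ra.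
  rw Q4. rewrite Q5. rw3 Q6.
  rewrite (tcL (D ⊗ ι) (D ∘ U) D) by tyeq. fixdc. rewrite (tens1_assoc _ D ι D). ra.
  mg. ra. rewrite as1.
  rewrite (tcL u e) by tyeq. fixdc. ra. rewrite <- (tens1_assoc _ e ι ι).
  rewrite (merge0 (e ⊗ ι) ι (D ∘ U) ι) by tyeq. rw rcu1. ids.
  rewrite <- (tens1_unitl _ (U ⊗ ι)). rewrite (merge0 u _ (idm unitOb) (U ⊗ ι)) by tyeq. ids.
  rewrite (xl u). fixdc. rw gu1. ids.
  rewrite (merge0 ι D U ι) by tyeq. ids. rewrite (xl U D). fixdc. ra.
  rewrite <- (tens1_assoc _ U ι ι). rewrite (merge (sym H H) ι (U ⊗ ι) ι) by tyeq.
  rewrite symU. ids. rewrite (tens1_assoc _ ι U ι). mg. ra. rewrite li. rw cU. ids.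
  exact rcu2.
Qed.

Lemma stepH : (s ⊗ ι) ∘ (D ∘ U) = d ∘ u.
Proof.
  pose proof gs2 as g2. pose proof stepE' as E.
  transitivity ((ι ⊗ (((c ∘ m) ⊗ ι) ∘ (ι ⊗ (d ∘ u)))) ∘ ((s ⊗ ι) ∘ (D ∘ U))).
  { rewrite g2. ids. reflexivity. }
  rewrite tcr by tyeq. ra.
  assert (Q : (ι ⊗ (ι ⊗ (d ∘ u))) ∘ ((s ⊗ ι) ∘ (D ∘ U)) = (((s ⊗ ι) ∘ (D ∘ U)) ⊗ (ι ⊗ ι)) ∘ (d ∘ u)).
  { transitivity (((s ⊗ ι) ∘ (D ∘ U)) ⊗ (d ∘ u)).
    - rewrite (xr ((s ⊗ ι) ∘ (D ∘ U)) (d ∘ u)). fixdc. rewrite tens1_assoc. reflexivity.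
    - rewrite (xl ((s ⊗ ι) ∘ (D ∘ U)) (d ∘ u)). fixdc. reflexivity. }
  rewrite Q. ra.
  rewrite <- (tens1_assoc _ ι (c ∘ m) ι), <- (tens1_assoc _ ((s ⊗ ι) ∘ (D ∘ U)) ι ι).
  mg. rewrite E. ids. reflexivity.
Qed.

Lemma fwd : s = (idm H ⊗ (e ∘ M)) ∘ ((d ∘ u) ⊗ idm H).
Proof.
  pose proof rs1 as r1.
  rewrite <- stepH. rewrite tcl by tyeq. rewrite (tens1_assoc _ s ι ι). mg. ids.
  rewrite (xl s (e ∘ M)). fixdc. ra. rewrite r1. ids. reflexivity.
Qed.
End Fwd.
End Main.
End S.

Theorem mainTheorem4 (C : SSMC) (H : Ob C)
    (mug etag deltag epsg mur etar deltar epsr s : Mor C) :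
  is_pre_hopf_frobenius C H mug etag deltag epsg mur etar deltar epsr s ->
  (is_integral_hopf C H mug etag deltar epsr s etar epsg <->
   s = (idm H ⊗ (epsr ∘ mur)) ∘ ((deltag ∘ etag) ⊗ idm H)).
Proof.
  intros P.
  pose proof P as [[[Tm [Tu _]] [[Td [Tc _]] _]] [[[TM [TU _]] [[TD [Te _]] _]] [_ [_ [Ts _]]]]].
  change (T C H mug 2 1) in Tm. change (T C H etag 0 1) in Tu.
  change (T C H deltag 1 2) in Td. change (T C H epsg 1 0) in Tc.
  change (T C H mur 2 1) in TM. change (T C H etar 0 1) in TU.
  change (T C H deltar 1 2) in TD. change (T C H epsr 1 0) in Te.
  change (T C H s 1 1) in Ts.
  split.
  - intros [_ [[_ li] [[_ ri] cU]]]. unfold id_H in *.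
    exact (fwd C H mug etag deltag epsg mur etar deltar epsr s Tm Tu Td Tc TM TU TD Te Ts P li ri cU).
  - intros hs. split; [exact (proj2 (proj2 P)) |].
    split; [split; [exact TU | exact (stepE C H mug etag deltag epsg mur etar deltar epsr s Tm Tu Td Tc TM TU TD Te Ts P hs)] |].
    split; [split; [exact Tc | exact (right_int C H mug etag deltag epsg mur etar deltar epsr s Tm Tu Td Tc TM TD Te Ts P hs)] |].
    exact (stepD C H mug etag deltag epsg mur etar deltar epsr s Tm Tu Td Tc TM TU TD Te Ts P hs).
Qed.
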